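(* Let $\mathbb{F}$ be an infinite field and let $k,l,m,n>1$ be integers. Let $\mathcal{F}$ be a flag of length $3$ in $\mathbb{F}^{k+l+1}$ with signature $(k,1,l)$ and $\mathcal{F}'$ a flag of length $3$ in $\mathbb{F}^{m+n+1}$ with signature $(m,1,n)$. Then the semigroups $\varphi(\mathcal{F})\subseteq M(k+l+1,\mathbb{F})$ and $\varphi(\mathcal{F}')\subseteq M(m+n+1,\mathbb{F})$ are isomorphic.
   Context: $M(N,\mathbb{F})$ is the semigroup of $N\times N$ matrices over $\mathbb{F}$, identified with linear operators on $\mathbb{F}^N$. A flag in $\mathbb{F}^N$ of length $r$ is a chain $0=V_0\subsetneq V_1\subsetneq\cdots\subsetneq V_r=\mathbb{F}^N$ of subspaces, with signature $(d_1,\dots,d_r)$, $d_i=\dim(V_i/V_{i-1})$. For such a flag, $\varphi(\mathcal{F})=\{a\in M(N,\mathbb{F}) : a(V_i)\subseteq V_{i-1}\text{ for all } i\}$. *)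

(* Defs.v *)
From HB Require Import structures.
From mathcomp Require Import all_boot all_order all_algebra.
Set Implicit Arguments. Unset Strict Implicit. Unset Printing Implicit Defensive.
Import GRing.Theory.
Local Open Scope ring_scope.

Definition infinite_field (F : fieldType) : Prop :=
  forall s : seq F, exists x : F, x \notin s.

(* Subspaces of F^N are represented (mxalgebra style) by square matrices
   'M[F]_N through their row spaces.  A flag of length r is a sequence
   [:: V_0; V_1; ...; V_r] with V_0 = 0, V_r = F^N and V_(i-1) < V_i
   (strict inclusion). *)
Definition is_flag (F : fieldType) (N : nat) (V : seq 'M[F]_N) : Prop :=
  [/\ (0 < size V)%N,
      (nth 0 V 0 == (0 : 'M[F]_N))%MS,
      (nth 0 V (size V).-1 == 1%:M)%MS &
      forall i, (i.+1 < size V)%N -> (nth 0 V i < nth 0 V i.+1)%MS].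

Definition flag_signature (F : fieldType) (N : nat) (V : seq 'M[F]_N) : seq nat :=
  [seq (\rank (nth (0 : 'M[F]_N)%R V i.+1) - \rank (nth (0 : 'M[F]_N)%R V i))%N
  | i <- iota 0 (size V).-1].

(* A matrix a acts on column vectors x |-> a *m x; the image of the
   subspace with row space V is therefore the row space of V *m a^T.
   With this convention the matrix product a *m b is the composition a o b. *)
Definition phi (F : fieldType) (N : nat) (V : seq 'M[F]_N) : 'M[F]_N -> Prop :=
  fun a => forall i, (0 < i < size V)%N ->
    (nth 0 V i *m a^T <= nth 0 V i.-1)%MS.

Definition semigroup_iso (F : fieldType) (N1 N2 : nat)
    (S : 'M[F]_N1 -> Prop) (S' : 'M[F]_N2 -> Prop) : Prop :=
  exists f : 'M[F]_N1 -> 'M[F]_N2,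
    [/\ forall a, S a -> S' (f a),
        forall a b, S a -> S b -> f a = f b -> a = b,
        forall c, S' c -> exists2 a, S a & f a = c &
        forall a b, S a -> S b -> f (a *m b) = f a *m f b].

(* Main.v *)
Require Import Defs.
From HB Require Import structures.
From mathcomp Require Import all_boot all_order all_algebra.
From mathcomp Require Import boolp classical_sets functions cardinality.
From mathcomp Require Import ring zify.
Set Implicit Arguments. Unset Strict Implicit. Unset Printing Implicit Defensive.

Module STm.
Local Open Scope classical_set_scope.

Definition injS {T U} (A : T -> Prop) (B : U -> Prop) :=
  exists f : T -> U, (forall x, A x -> B (f x)) /\
    (forall x y, A x -> A y -> f x = f y -> x = y).

Definition bijS {T U} (A : T -> Prop) (B : U -> Prop) :=
  exists (h : T -> U) (h' : U -> T), [/\ (forall x, A x -> B (h x)),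
    (forall y, B y -> A (h' y)), (forall x, A x -> h' (h x) = x) &
    (forall y, B y -> h (h' y) = y)].

Section CSB.
Variables (T U : Type) (t0 : T) (u0 : U) (A : T -> Prop) (B : U -> Prop).

Lemma inv_of (h : T -> U) : (forall x, A x -> B (h x)) ->
  (forall x y, A x -> A y -> h x = h y -> x = y) ->
  (forall y, B y -> exists x, A x /\ h x = y) -> bijS A B.
Proof.
move=> hAB hi hs.
have : forall y, exists x, B y -> A x /\ h x = y.
  move=> y; case: (pselect (B y)) => [/hs [x Hx]|nB]; [by exists x | by exists t0].
case/choice => h' Hh'.
exists h, h'; split.
- exact: hAB.
- by move=> y /Hh' [].
- by move=> x Ax; have [? ?] := Hh' _ (hAB _ Ax); apply: hi.
- by move=> y /Hh' [].
Qed.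

Lemma CSB : injS A B -> injS B A -> bijS A B.
Proof.
move=> [f [fAB fi]] [g [gBA gi]].
pose C := fix C n x := match n with
  | 0 => A x /\ ~ (exists y, B y /\ g y = x)
  | n.+1 => exists z, C n z /\ x = g (f z) end.
pose CC x := exists n, C n x.
have CA n x : C n x -> A x.
  by elim: n x => [|n IH] x /=; [case | case=> z [/IH Az ->]; apply/gBA/fAB].
have : forall x, exists y, (exists y, B y /\ g y = x) -> B y /\ g y = x.
  move=> x; case: (pselect (exists y, B y /\ g y = x)) => [[y Hy]|nE];
    [by exists y | by exists u0].
case/choice => gi' Hgi.
pose h x := if pselect (CC x) then f x else gi' x.
have hC x : CC x -> h x = f x.
  by rewrite /h; case: (pselect (CC x)).
have hN x : ~ CC x -> h x = gi' x.
  by rewrite /h; case: (pselect (CC x)).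
have notC x : A x -> ~ CC x -> exists y, B y /\ g y = x.
  move=> Ax nC; apply: contra_notP nC => nE; exists 0%N; by split.
apply: inv_of (h) _ _ _.
- move=> x Ax; rewrite /h; case: pselect => [[n /CA/fAB] //|nC].
  by have [] := Hgi _ (notC _ Ax nC).
- move=> x y Ax Ay; rewrite /h.
  case: (pselect (CC x)) => [Cx|nCx]; case: (pselect (CC y)) => [Cy|nCy] /=.
  + exact: fi.
  + move=> E; case: Cx => n Cnx.
    have [By gy] := Hgi _ (notC _ Ay nCy).
    have : CC y by exists n.+1; exists x; split; rewrite // E gy.
    by move/nCy.
  + move=> E; case: Cy => n Cny.
    have [Bx gx] := Hgi _ (notC _ Ax nCx).
    have : CC x by exists n.+1; exists y; split; rewrite // -E gx.
    by move/nCx.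
  + move=> E.
    have [_ gx] := Hgi _ (notC _ Ax nCx).
    have [_ gy] := Hgi _ (notC _ Ay nCy).
    by rewrite -gx -gy E.
- move=> y By; case: (pselect (CC (g y))) => [[[|n] Cn]|nC].
  + by case: Cn => _; case; exists y.
  + case: Cn => z [Cz E]; have Az := CA _ _ Cz.
    have yfz : y = f z by apply: gi => //; exact: fAB.
    exists z; split => //; rewrite hC ?yfz //; by exists n.
  + exists (g y); split; first exact: gBA.
    rewrite hN //.
    have [By' gy'] := Hgi (g y) (ex_intro _ y (conj By erefl)).
    exact: gi.
Qed.

End CSB.

Section Compar.
Variables (T U : Type) (t0 : T) (u0 : U) (A : T -> Prop) (B : U -> Prop).

Lemma compar : injS A B \/ injS B A.
Proof.
pose P : set (set (T * U)) := fun R =>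
  [/\ (forall p, R p -> A p.1 /\ B p.2),
      (forall x y y', R (x, y) -> R (x, y') -> y = y') &
      (forall x x' y, R (x, y) -> R (x', y) -> x = x')].
have [R [[RAB Rf Ri] Rmax]] : exists R, P R /\ forall R', R `<` R' -> ~ P R'.
  apply: Zorn_bigcup => Fm FP Ftot; split.
  - by move=> p [R FR Rp]; have [h _ _] := FP R FR; exact: h.
  - move=> x y y' [R1 F1 R1p] [R2 F2 R2p].
    have [S12|S21] := Ftot _ _ F1 F2.
      by have [_ h _] := FP R2 F2; apply: h (S12 _ R1p) R2p.
    by have [_ h _] := FP R1 F1; apply: h R1p (S21 _ R2p).
  - move=> x x' y [R1 F1 R1p] [R2 F2 R2p].
    have [S12|S21] := Ftot _ _ F1 F2.
      by have [_ _ h] := FP R2 F2; apply: h (S12 _ R1p) R2p.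
    by have [_ _ h] := FP R1 F1; apply: h R1p (S21 _ R2p).
case: (pselect (forall x, A x -> exists y, R (x, y))) => [HA|nHA].
  left; have : forall x, exists y, A x -> R (x, y).
    move=> x; case: (pselect (A x)) => [/HA [y Hy]|]; [by exists y | by exists u0].
  case/choice=> f Hf; exists f; split.
    by move=> x /Hf /RAB [].
  move=> x y Ax Ay E; have Rx := Hf x Ax; have Ry := Hf y Ay.
  by rewrite -E in Ry; exact: Ri Rx Ry.
case: (pselect (forall y, B y -> exists x, R (x, y))) => [HB|nHB].
  right; have : forall y, exists x, B y -> R (x, y).
    move=> y; case: (pselect (B y)) => [/HB [x Hx]|]; [by exists x | by exists t0].
  case/choice=> g Hg; exists g; split.
    by move=> y /Hg /RAB [].
  move=> x y Bx By E; have Rx := Hg x Bx; have Ry := Hg y By.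
  by rewrite -E in Ry; exact: Rf Rx Ry.
exfalso.
move: nHA => /existsNP [x /not_implyP [Ax /forallNP nRx]].
move: nHB => /existsNP [y /not_implyP [By /forallNP nRy]].
apply: (Rmax (fun p => R p \/ p = (x, y))).
  split; first by move=> p Rp; left.
  by move=> /(_ (x, y) (or_intror erefl)) /nRx.
split.
- by move=> p [/RAB //|->].
- move=> a b b' [Rab|E1] [Rab'|E2].
  + exact: Rf Rab Rab'.
  + by case: E2 => E _; rewrite E in Rab; case: (nRx _ Rab).
  + by case: E1 => E _; rewrite E in Rab'; case: (nRx _ Rab').
  + by case: E1 => _ ->; case: E2 => _ ->.
- move=> a a' b [Rab|E1] [Rab'|E2].
  + exact: Ri Rab Rab'.
  + by case: E2 => _ E; rewrite E in Rab; case: (nRy _ Rab).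
  + by case: E1 => _ E; rewrite E in Rab'; case: (nRy _ Rab').
  + by case: E1 => -> _; case: E2 => -> _.
Qed.
End Compar.

Section Hess.
Variables (T : Type) (u : nat -> T) (u_inj : injective u).

Let A_of (G : set ((T * T) * T)) z := exists p, G (p, z).
Let valid (G : set ((T * T) * T)) :=
  [/\ (forall p z z', G (p, z) -> G (p, z') -> z = z'),
      (forall p p' z, G (p, z) -> G (p', z) -> p = p'),
      (forall x y, A_of G x -> A_of G y -> exists z, G ((x, y), z)),
      (forall x y z, G ((x, y), z) -> A_of G x /\ A_of G y) &
      (forall n, A_of G (u n))].
Let P (G : set ((T * T) * T)) := (forall q, ~ G q) \/ valid G.

Lemma valid_base : exists G0, valid G0 /\ exists q, G0 q.
Proof.
have /card_set_bijP [pr [_ pri prs]] := card_nat2.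
have prI : injective pr by move=> a b; apply: pri; rewrite in_setT.
have prS n : exists p, pr p = n by have [p _ <-] := prs n I; exists p.
pose G0 : set ((T * T) * T) := fun q => exists a b, q = ((u a, u b), u (pr (a, b))).
have AG0 z : A_of G0 z <-> exists n, z = u n.
  split; first by case=> p [a [b [_ ->]]]; eexists.
  case=> n ->; have [[a b] E] := prS n; exists (u a, u b); exists a, b; by rewrite E.
exists G0; split; last by exists ((u 0, u 0), u (pr (0, 0))); exists 0, 0.
split.
- move=> p z z' [a [b [-> ->]]] [a' [b' [[/u_inj Ea /u_inj Eb] ->]]].
  by rewrite Ea Eb.
- move=> p p' z [a [b [-> ->]]] [a' [b' [-> /u_inj /prI [-> ->]]]].
  by [].
- move=> x y /AG0 [n ->] /AG0 [n' ->]; exists (u (pr (n, n'))); by exists n, n'.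
- move=> x y z [a [b [[-> ->] _]]]; split; apply/AG0; by eexists.
- by move=> n; apply/AG0; exists n.
Qed.

Lemma hessen : exists pi : T * T -> T, injective pi.
Proof.
have [G [PG Gmax]] : exists G, P G /\ forall G', G `<` G' -> ~ P G'.
  apply: Zorn_bigcup => Fm FP Ftot.
  case: (pselect (exists G, Fm G /\ exists q, G q)) => [[G0 [FG0 [q0 G0q]]]|nE]; last first.
    left=> q [G FG Gq]; apply: nE; exists G; split => //; by exists q.
  have vF G q : Fm G -> G q -> valid G.
    by move=> FG Gq; case: (FP G FG) => // /(_ q Gq).
  have AU z : A_of (\bigcup_(X in Fm) X) z <-> exists2 G, Fm G & A_of G z.
    split; first by case=> p [G FG Gpz]; exists G => //; exists p.
    by case=> G FG [p Gpz]; exists p; exists G.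
  right; split.
  - move=> p z z' [G1 F1 G1p] [G2 F2 G2p].
    have [S12|S21] := Ftot _ _ F1 F2.
      by have [h _ _ _ _] := vF _ _ F2 G2p; apply: h (S12 _ G1p) G2p.
    by have [h _ _ _ _] := vF _ _ F1 G1p; apply: h G1p (S21 _ G2p).
  - move=> p p' z [G1 F1 G1p] [G2 F2 G2p].
    have [S12|S21] := Ftot _ _ F1 F2.
      by have [_ h _ _ _] := vF _ _ F2 G2p; apply: h (S12 _ G1p) G2p.
    by have [_ h _ _ _] := vF _ _ F1 G1p; apply: h G1p (S21 _ G2p).
  - move=> x y /AU [G1 F1 [p1 G1x]] /AU [G2 F2 [p2 G2y]].
    have [S12|S21] := Ftot _ _ F1 F2.
      have [_ _ h _ _] := vF _ _ F2 G2y.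
      have [z Hz] := h x y (ex_intro _ p1 (S12 _ G1x)) (ex_intro _ p2 G2y).
      by exists z; exists G2.
    have [_ _ h _ _] := vF _ _ F1 G1x.
    have [z Hz] := h x y (ex_intro _ p1 G1x) (ex_intro _ p2 (S21 _ G2y)).
    by exists z; exists G1.
  - move=> x y z [G1 F1 G1p]; have [_ _ _ h _] := vF _ _ F1 G1p.
    by have [? ?] := h _ _ _ G1p; split; apply/AU; exists G1.
  - move=> n; apply/AU; exists G0 => //; by have [_ _ _ _ h] := vF _ _ FG0 G0q.
have vG : valid G.
  case: PG => // G0.
  have [G1 [vG1 [q1 G1q]]] := valid_base.
  exfalso; apply: (Gmax G1); last by right.
  split; first by move=> q /G0.
  by move=> /(_ q1 G1q) /G0.
case: vG => Gf Gi Gd Gdx GN.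
set A := A_of G.
have : forall p, exists z, A p.1 /\ A p.2 -> G (p, z).
  move=> [x y]; case: (pselect (A x /\ A y)) => [[Ax Ay]|nA].
    by have [z Hz] := Gd x y Ax Ay; exists z.
  by exists (u 0).
case/choice => fG HfG.
have fG_G x y : A x -> A y -> G ((x, y), fG (x, y)) by move=> Ax Ay; exact: (HfG (x, y)).
have fG_A x y : A x -> A y -> A (fG (x, y)) by move=> Ax Ay; exists (x, y); exact: fG_G.
have fG_inj x y x' y' : A x -> A y -> A x' -> A y' -> fG (x, y) = fG (x', y') -> x = x' /\ y = y'.
  move=> Ax Ay Ax' Ay' E; have H2 := fG_G _ _ Ax' Ay'; rewrite -E in H2.
  by case: (Gi _ _ _ (fG_G _ _ Ax Ay) H2) => -> ->.
have uA n : A (u n) by exact: GN.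
have [[j [jA jinj]]|[j [jA jinj]]] := compar (u 0) (u 0) A (fun x => ~ A x); last first.
  pose e x := if pselect (A x) then fG (x, u 0) else fG (j x, u 1).
  have eA x : A (e x) by rewrite /e; case: pselect => Ax; apply: fG_A => //; exact: jA.
  have eI : injective e.
    move=> x y; rewrite /e; case: (pselect (A x)) => Ax; case: (pselect (A y)) => Ay.
    - by case/fG_inj.
    - by case/fG_inj => //; [exact: jA | move=> _ /u_inj].
    - by case/fG_inj => //; [exact: jA | move=> _ /u_inj].
    - by case/fG_inj => //; [exact: jA | exact: jA | move=> E _; exact: jinj E].
  exists (fun p => fG (e p.1, e p.2)) => -[x y] [x' y'] /= /fG_inj.
  by case=> // /eI -> /eI ->.
exfalso.
pose B z := exists x, A x /\ z = j x.
have BnA z : B z -> ~ A z by case=> x [Ax ->]; exact: jA.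
have : forall z, exists x, B z -> A x /\ z = j x.
  move=> z; case: (pselect (B z)) => [[x Hx]|nB]; [by exists x | by exists (u 0)].
case/choice => jinv Hjinv.
pose A' z := A z \/ B z.
pose D (p : T * T) := [/\ A' p.1, A' p.2 & ~ (A p.1 /\ A p.2)].
pose dec1 z := if pselect (A z) then z else jinv z.
have d1A z : A z -> dec1 z = z by rewrite /dec1; case: pselect.
have d1N z : ~ A z -> dec1 z = jinv z by rewrite /dec1; case: pselect.
have dec1A z : A' z -> A (dec1 z).
  case: (pselect (A z)) => Az; first by rewrite d1A.
  by rewrite d1N // => -[//|/Hjinv []].
have dec1I z z' : A' z -> A' z' -> (A z <-> A z') -> dec1 z = dec1 z' -> z = z'.
  move=> Hz Hz' E; case: (pselect (A z)) => Az; case: (pselect (A z')) => Az'.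
  - by rewrite !d1A.
  - by case: Az'; apply/E.
  - by case: Az; apply/E.
  rewrite !d1N //.
  case: Hz => [//|/Hjinv [_ Ez]]; case: Hz' => [//|/Hjinv [_ Ez']] E'.
  by rewrite Ez Ez' E'.
pose tg (p : T * T) := if pselect (A p.1) then u 0 else if pselect (A p.2) then u 1 else u 2.
have tg1 p : A p.1 -> tg p = u 0 by rewrite /tg => a1; case: (pselect (A p.1)).
have tg2 p : ~ A p.1 -> A p.2 -> tg p = u 1.
  by rewrite /tg => n1 a2; case: (pselect (A p.1)) => //= _; case: (pselect (A p.2)).
have tg3 p : ~ A p.1 -> ~ A p.2 -> tg p = u 2.
  by rewrite /tg => n1 n2; case: (pselect (A p.1)) => //= _; case: (pselect (A p.2)).
have tgE p : tg p = u (if `[< A p.1 >] then 0 else if `[< A p.2 >] then 1 else 2)%N.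
  case: (pselect (A p.1)) => a1; first by rewrite tg1 // asboolT.
  rewrite asboolF //; case: (pselect (A p.2)) => a2; first by rewrite tg2 // asboolT.
  by rewrite tg3 // asboolF.
have tgI p p' : D p -> D p' -> tg p = tg p' -> (A p.1 <-> A p'.1) /\ (A p.2 <-> A p'.2).
  move=> [_ _ np] [_ _ np']; rewrite !tgE => /u_inj.
  case: (asboolP (A p.1)) => a1; case: (asboolP (A p'.1)) => a1';
  by case: (asboolP (A p.2)) => a2; case: (asboolP (A p'.2)) => a2' //= _; tauto.
pose kap p := j (fG (fG (dec1 p.1, dec1 p.2), tg p)).
have tgA p : A (tg p) by rewrite tgE; exact: uA.
have injDB : injS D B.
  exists kap; split.
    move=> p [h1 h2 _]; exists (fG (fG (dec1 p.1, dec1 p.2), tg p)); split => //.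
    apply: (fG_A); last exact: tgA.
    by apply: (fG_A); apply: dec1A.
  move=> [x y] [x' y'] Dp Dp' /jinj.
  case: Dp Dp' => [h1 h2 h3] [h1' h2' h3'].
  have Ap1 := dec1A _ h1; have Ap2 := dec1A _ h2.
  have Ap1' := dec1A _ h1'; have Ap2' := dec1A _ h2'.
  case/(_ (fG_A _ _ (fG_A _ _ Ap1 Ap2) (tgA _)) (fG_A _ _ (fG_A _ _ Ap1' Ap2') (tgA _))).
  case/fG_inj => //; [exact: fG_A | exact: fG_A | ].
  case/fG_inj => // E1 E2 Et.
  have [T1 T2] := tgI (x, y) (x', y') (And3 h1 h2 h3) (And3 h1' h2' h3') Et.
  by rewrite /= in T1 T2 E1 E2 h1 h1' h2 h2'; rewrite (dec1I _ _ h1 h1' T1 E1) (dec1I _ _ h2 h2' T2 E2).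
have injBD : injS B D.
  exists (fun z => (z, z)); split; last by move=> x y _ _ [].
  by move=> z Bz; split; [right | right | case=> /(BnA _ Bz)].
have [h [h' [hB h'D h'h hh']]] := CSB (u 0, u 0) (u 0) injDB injBD.
pose G' : set ((T * T) * T) := fun q => G q \/ (D q.1 /\ q.2 = h q.1).
have AG' z : A_of G' z <-> A' z.
  split.
    case=> p [Gp|[Dp /= ->]]; first by left; exists p.
    by right; exact: hB.
  case=> [[p Gp]|Bz]; first by exists p; left.
  by exists (h' z); right; split; [exact: h'D | rewrite /= hh'].
have GD p z : G (p, z) -> ~ D p.
  case: p => x y /Gdx [Ax Ay] [_ _]; exact.
apply: (Gmax G').
  split; first by move=> q Gq; left.
  pose z := j (u 0).
  have Bz : B z by exists (u 0).
  have Dzz : D (z, z) by split; [right | right | case=> /(BnA _ Bz)].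
  move=> /(_ ((z, z), h (z, z)) (or_intror (conj Dzz erefl))) /GD; exact.
right; split.
- move=> p z z' [Gp|[Dp /= ->]] [Gp'|[Dp' /= ->]] //.
  + exact: Gf Gp Gp'.
  + by case: (GD _ _ Gp).
  + by case: (GD _ _ Gp').
- move=> p p' z [Gp|[Dp /= Ez]] [Gp'|[Dp' /= Ez']].
  + exact: Gi Gp Gp'.
  + by exfalso; apply: (BnA (h p')); [exact: hB | rewrite -Ez'; exists p].
  + by exfalso; apply: (BnA (h p)); [exact: hB | rewrite -Ez; exists p'].
  + by move: Dp Dp' => /= Dp Dp'; rewrite -(h'h _ Dp) -(h'h _ Dp') -Ez -Ez'.
- move=> x y /AG' Hx /AG' Hy.
  case: (pselect (A x /\ A y)) => [[Ax Ay]|nA].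
    by exists (fG (x, y)); left; exact: fG_G.
  by exists (h (x, y)); right; split.
- move=> x y z [/Gdx [Ax Ay]|[[/= Hx Hy _] _]]; split; apply/AG' => //; by left.
- by move=> n; apply/AG'; left.
Qed.

End Hess.

End STm.
Import STm.

Module LAm.
Import GRing.Theory.
Local Open Scope ring_scope.

Section Std.
Variables (F : fieldType) (k l : nat).
Local Notation N := (k + l + 1)%N.
Local Notation TT := ('M[F]_(k,1) * 'M[F]_(1,l) * 'M[F]_(k,l))%type.

Definition tmul (t1 t2 : TT) : TT := (0, 0, t1.1.1 *m t2.1.2).

Definition Cstd (t : TT) : 'M[F]_N :=
  col_mx (col_mx 0 (row_mx (row_mx t.2^T 0) t.1.2^T)) (row_mx (row_mx t.1.1^T 0) 0).

Definition dec (P : 'M[F]_N) (t : TT) : 'M[F]_N := (invmx P *m Cstd t *m P)^T.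

Lemma Cstd_mul t1 t2 : Cstd t2 *m Cstd t1 = Cstd (tmul t1 t2).
Proof.
rewrite /Cstd /tmul /= !mul_col_mx !mul0mx.
rewrite mul_row_col mul_row_col mul_row_col mul_row_col.
rewrite !mulmx0 !mul0mx !add0r ?addr0 !mul_mx_row !mulmx0 !trmx0 !row_mx0 trmx_mul.
by [].
Qed.

Lemma dec_mul P t1 t2 : P \in unitmx -> dec P t1 *m dec P t2 = dec P (tmul t1 t2).
Proof.
move=> uP; rewrite /dec -trmx_mul -Cstd_mul; congr (_^T).
by rewrite !mulmxA mulmxK.
Qed.

Lemma Cstd_inj : injective Cstd.
Proof.
move=> [[x y] A] [[x' y'] A']; rewrite /Cstd /=.
case/eq_col_mx=> /eq_col_mx [_ /eq_row_mx [/eq_row_mx [/trmx_inj -> _] /trmx_inj ->]].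
by case/eq_row_mx=> /eq_row_mx [/trmx_inj -> _].
Qed.

Lemma dec_inj P : P \in unitmx -> injective (dec P).
Proof.
move=> uP t t' /trmx_inj /(can_inj (mulmxK uP)) /(congr1 (mulmx P)).
by rewrite !mulKVmx // => /Cstd_inj.
Qed.

End Std.


Section Flag.
Variables (F : fieldType) (k l : nat).
Local Notation N := (k + l + 1)%N.
Variables (B1 : 'M[F]_(k, N)) (B3 : 'M[F]_(l, N)) (e : 'M[F]_(1, N)).
Let P : 'M[F]_N := col_mx (col_mx B1 B3) e.
Hypothesis uP : P \in unitmx.

Lemma Pexp r (u : 'M[F]_(r,k)) (w : 'M[F]_(r,l)) (z : 'M[F]_(r,1)) :
  row_mx (row_mx u w) z *m P = u *m B1 + w *m B3 + z *m e.
Proof. by rewrite /P mul_row_col mul_row_col. Qed.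

Lemma sub_B1 r (M : 'M[F]_(r, N)) :
  (M <= B1)%MS <-> exists u, M *m invmx P = row_mx (row_mx u 0) 0.
Proof.
split.
  case/submxP=> D ->; exists D.
  have -> : B1 = row_mx (row_mx 1%:M 0) 0 *m P by rewrite Pexp !mul0mx !addr0 mul1mx.
  by rewrite mulmxA mulmxK // !mul_mx_row !mulmx0 mulmx1.
case=> u /(congr1 (mulmx^~ P)); rewrite mulmxKV // Pexp !mul0mx !addr0 => ->.
exact: submxMl.
Qed.

Lemma sub_B1e r (M : 'M[F]_(r, N)) :
  (M <= col_mx B1 e)%MS <-> exists u z, M *m invmx P = row_mx (row_mx u 0) z.
Proof.
split.
  case/submxP=> D ->; exists (lsubmx D), (rsubmx D).
  rewrite -{1}[D]hsubmxK mul_row_col.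
  have -> : lsubmx D *m B1 + rsubmx D *m e = row_mx (row_mx (lsubmx D) 0) (rsubmx D) *m P.
    by rewrite Pexp mul0mx addr0.
  by rewrite mulmxK.
case=> u [z] /(congr1 (mulmx^~ P)); rewrite mulmxKV // Pexp mul0mx addr0 => ->.
by rewrite -mul_row_col submxMl.
Qed.

Lemma PbP (b : 'M[F]_N) : P *m b *m invmx P =
  col_mx (col_mx (B1 *m b *m invmx P) (B3 *m b *m invmx P)) (e *m b *m invmx P).
Proof. by rewrite /P !mul_col_mx. Qed.

Lemma phi_dec (V0 V1 V2 V3 : 'M[F]_N) :
  (V0 == (0:'M[F]_N))%MS -> (V3 == 1%:M)%MS -> (V1 :=: B1)%MS -> (V2 :=: col_mx B1 e)%MS ->
  forall a, phi [:: V0; V1; V2; V3] a <-> exists t, a = dec P t.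
Proof.
move=> /eqmxP H0 /eqmxP H3 H1 H2 a.
rewrite /phi.
have Hiff : (forall i, (0 < i < size [:: V0; V1; V2; V3])%N ->
    (nth (0:'M[F]_N) [:: V0; V1; V2; V3] i *m a^T <= nth (0:'M[F]_N) [:: V0; V1; V2; V3] i.-1)%MS) <->
   [/\ (B1 *m a^T <= (0:'M[F]_(N,N)))%MS, (col_mx (B1 *m a^T) (e *m a^T) <= B1)%MS &
       (a^T <= col_mx B1 e)%MS].
  have e1 : (V1 *m a^T <= V0)%MS = (B1 *m a^T <= (0:'M[F]_(N,N)))%MS.
    by rewrite (eqmxMr _ H1) H0.
  have e2 : (V2 *m a^T <= V1)%MS = (col_mx (B1 *m a^T) (e *m a^T) <= B1)%MS.
    by rewrite (eqmxMr _ H2) H1 mul_col_mx.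
  have e3 : (V3 *m a^T <= V2)%MS = (a^T <= col_mx B1 e)%MS.
    by rewrite (eqmxMr _ H3) H2 mul1mx.
  split; first by move=> H; split; [rewrite -e1; exact: (H 1%N) | rewrite -e2; exact: (H 2%N) | rewrite -e3; exact: (H 3%N)].
  by case=> ? ? ? [|[|[|[|i]]]] //= _; rewrite ?e1 ?e2 ?e3.
apply: (iff_trans Hiff).
split.
  case=> h1; rewrite col_mx_sub => /andP [_ /sub_B1 [u hu]] h3.
  have /sub_B1e [u3 [z3 h3']] : (B3 *m a^T <= col_mx B1 e)%MS.
    exact: submx_trans (submxMl _ _) h3.
  move: h1; rewrite submx0 => /eqP h1.
  exists (u^T, z3^T, u3^T); apply: trmx_inj; rewrite /dec trmxK.
  have <- : P *m a^T *m invmx P = Cstd (u^T, z3^T, u3^T).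
    by rewrite PbP h1 mul0mx hu h3' /Cstd /= !trmxK.
  by rewrite !mulmxA (mulVmx uP) mul1mx mulmxKV.
case=> t ->; rewrite /dec trmxK.
set b := invmx P *m Cstd t *m P.
have hC : P *m b *m invmx P = Cstd t.
  by rewrite /b !mulmxA mulmxK // (mulmxV uP) mul1mx.
move: (hC); rewrite PbP /Cstd => /eq_col_mx [/eq_col_mx [h1 h3] h2].
have h1' : B1 *m b = 0.
  by apply: (can_inj (mulmxKV uP)); rewrite h1 mul0mx.
have h2' : (e *m b <= B1)%MS.
  by apply/sub_B1; eexists; exact: h2.
have h3' : (B3 *m b <= col_mx B1 e)%MS.
  by apply/sub_B1e; do 2 eexists; exact: h3.
split.
- by rewrite h1' sub0mx.
- by rewrite col_mx_sub h1' sub0mx.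
have hPb : (P *m b <= col_mx B1 e)%MS.
  rewrite /P mul_col_mx mul_col_mx !col_mx_sub h1' sub0mx h3' /=.
  apply: submx_trans h2' _; rewrite -addsmxE; exact: addsmxSl.
apply: submx_trans hPb; rewrite -{1}[b](mulKmx uP); exact: submxMl.
Qed.

End Flag.


Section Basis.
Variables (F : fieldType) (k l : nat).
Local Notation N := (k + l + 1)%N.

Lemma sub_colL m1 m2 n (A : 'M[F]_(m1, n)) (B : 'M[F]_(m2, n)) : (A <= col_mx A B)%MS.
Proof. rewrite -addsmxE; exact: addsmxSl. Qed.
Lemma sub_colR m1 m2 n (A : 'M[F]_(m1, n)) (B : 'M[F]_(m2, n)) : (B <= col_mx A B)%MS.
Proof. rewrite -addsmxE; exact: addsmxSr. Qed.

Lemma flag_basis (V : seq 'M[F]_N) : is_flag V -> flag_signature V = [:: k; 1; l]%N ->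
  exists V0 V1 V2 V3 (B1 : 'M[F]_(k,N)) (B3 : 'M[F]_(l,N)) (e : 'M[F]_(1,N)),
   [/\ V = [:: V0; V1; V2; V3], col_mx (col_mx B1 B3) e \in unitmx,
       (V0 == (0:'M[F]_N))%MS, (V3 == 1%:M)%MS & (V1 == B1)%MS && (V2 == col_mx B1 e)%MS].
Proof.
case=> sz0 h0 h3 hlt hsig.
have := congr1 size hsig; rewrite size_map size_iota /=.
case: V sz0 h0 h3 hlt hsig => [|V0 [|V1 [|V2 [|V3 [|]]]]] //= _ h0 h3 hlt [r1 r2 r3] _.
have rk0 : \rank V0 = 0%N by rewrite (eqmx_rank h0) mxrank0.
have rk1 : \rank V1 = k by move: r1; rewrite rk0 subn0.
have rk2 : \rank V2 = k.+1 by move: r2; rewrite rk1; lia.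
have s12 : (V1 <= V2)%MS by apply: ltmxW; exact: (hlt 1%N).
have rkD : \rank (V2 :\: V1)%MS = 1%N.
  have := mxrank_cap_compl V2 V1.
  rewrite (eqmx_rank (introT eqmxP (capmx_idPr s12))) rk1 rk2; lia.
have rkC : \rank (V2^C)%MS = l by rewrite mxrank_compl rk2; lia.
pose B1 : 'M[F]_(k,N) := castmx (rk1, erefl N) (row_base V1).
pose e : 'M[F]_(1,N) := castmx (rkD, erefl N) (row_base (V2 :\: V1)%MS).
pose B3 : 'M[F]_(l,N) := castmx (rkC, erefl N) (row_base (V2^C)%MS).
have EB1 : (B1 :=: V1)%MS := eqmx_trans (eqmx_cast _ _) (eq_row_base V1).
have Ee : (e :=: V2 :\: V1)%MS := eqmx_trans (eqmx_cast _ _) (eq_row_base _).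
have EB3 : (B3 :=: V2^C)%MS := eqmx_trans (eqmx_cast _ _) (eq_row_base _).
have E2 : (col_mx B1 e :=: V2)%MS.
  apply: eqmx_trans (eqmx_sym (addsmxE _ _)) _.
  apply: eqmx_trans (adds_eqmx EB1 Ee) _.
  rewrite addsmxC.
  apply: eqmx_trans _ (addsmx_diff_cap_eq V2 V1).
  apply: adds_eqmx => //; exact: eqmx_sym (capmx_idPr s12).
exists V0, V1, V2, V3, B1, B3, e; split => //.
- rewrite -row_full_unit -sub1mx.
  have : (1%:M <= (V2 + V2^C))%MS by rewrite sub1mx addsmx_compl_full.
  move/submx_trans; apply; rewrite addsmx_sub; apply/andP; split.
    rewrite -E2 col_mx_sub; apply/andP; split; last exact: sub_colR.
    exact: submx_trans (sub_colL B1 B3) (sub_colL _ e).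
  rewrite -EB3; exact: submx_trans (sub_colR B1 B3) (sub_colL _ e).
- by apply/andP; split; apply/eqmxP; apply: eqmx_sym.
Qed.
End Basis.

End LAm.
Import LAm.

Module CARDm.
Import GRing.Theory.
Local Open Scope ring_scope.

Section Lead.
Variables (F : fieldType) (a b : nat).
Implicit Types (M : 'M[F]_(a, b)) (c : F).

Definition lead M : F :=
  if [pick ij | M ij.1 ij.2 != 0] is Some ij then M ij.1 ij.2 else 0.

Lemma lead_eq0 M : (lead M == 0) = (M == 0).
Proof.
rewrite /lead; case: pickP => [ij /= Hij | H0].
  apply/idP/idP => [/eqP E|/eqP E]; first by rewrite E eqxx in Hij.
  by rewrite E mxE eqxx in Hij.
rewrite eqxx; apply/esym/eqP/matrixP => i j; rewrite mxE.
by have /= /negbFE/eqP := H0 (i, j).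
Qed.

Lemma leadZ c M : lead (c *: M) = c * lead M.
Proof.
have [->|c0] := eqVneq c 0.
  by rewrite scale0r mul0r; apply/eqP; rewrite lead_eq0.
rewrite /lead (@eq_pick _ _ (fun ij : 'I_a * 'I_b => M ij.1 ij.2 != 0)).
  by case: pickP => [ij _|_]; rewrite ?mxE ?mulr0.
by move=> ij /=; rewrite mxE mulf_eq0 negb_or c0.
Qed.

Definition nrm M := (lead M)^-1 *: M.
Definition Nset M := M != 0 /\ lead M = 1.

Lemma nrmK M : lead M *: nrm M = M.
Proof.
have [->|M0] := eqVneq M 0; first by rewrite /nrm !scaler0.
by rewrite /nrm scalerA divff ?scale1r // lead_eq0.
Qed.

Lemma nrmN M : M != 0 -> Nset (nrm M).
Proof.
move=> M0; have l0 : lead M != 0 by rewrite lead_eq0.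
split; last by rewrite /nrm leadZ mulVf.
by rewrite /nrm scaler_eq0 negb_or M0 invr_eq0 l0.
Qed.

Lemma nrm_id M : Nset M -> nrm M = M.
Proof. by case=> _ l1; rewrite /nrm l1 invr1 scale1r. Qed.

Lemma nrmZ c M : c != 0 -> nrm (c *: M) = nrm M.
Proof.
move=> c0; have [->|M0] := eqVneq M 0; first by rewrite scaler0.
have l0 : lead M != 0 by rewrite lead_eq0.
by rewrite /nrm leadZ scalerA invfM mulrAC mulVf ?mul1r.
Qed.

End Lead.

Section Hom.
Variables (F : fieldType) (a b a' b' : nat).
Variable (gam : 'M[F]_(a, b) -> 'M[F]_(a', b')).

Definition hom (M : 'M[F]_(a, b)) : 'M[F]_(a', b') := lead M *: gam (nrm M).

Lemma homZ c M : hom (c *: M) = c *: hom M.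
Proof.
have [->|c0] := eqVneq c 0.
  have l00 : lead (0 : 'M[F]_(a,b)) = 0 by apply/eqP; rewrite lead_eq0.
  by rewrite /hom !scale0r l00 scale0r.
by rewrite /hom leadZ nrmZ // scalerA.
Qed.

Lemma hom0 : hom 0 = 0.
Proof. by rewrite -(scale0r (0 : 'M[F]_(a,b))) homZ scale0r. Qed.

End Hom.

Lemma homK (F : fieldType) a b a' b' (gam : 'M[F]_(a, b) -> 'M[F]_(a', b')) gam' :
  (forall x, Nset x -> Nset (gam x)) -> (forall x, Nset x -> gam' (gam x) = x) ->
  forall M, hom gam' (hom gam M) = M.
Proof.
move=> gN gK M; have [->|M0] := eqVneq M 0; first by rewrite !hom0.
have Nn := nrmN M0; have [gn0 gl] := gN _ Nn.
have l0 : lead M != 0 by rewrite lead_eq0.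
rewrite {1}/hom leadZ gl mulr1 nrmZ // nrm_id // gK //; exact: nrmK.
Qed.

Section Outer.
Variables (F : fieldType) (k l m n : nat).

Lemma outerE (x : 'M[F]_(k,1)) (y : 'M[F]_(1,l)) i j : (x *m y) i j = x i 0 * y 0 j.
Proof. by rewrite mxE big_ord1. Qed.

Lemma nz_entry a b (M : 'M[F]_(a, b)) : M != 0 -> exists i j, M i j != 0.
Proof.
move=> M0; case: (pickP (fun ij : 'I_a * 'I_b => M ij.1 ij.2 != 0)) => [[i j] /= H|H].
  by exists i, j.
case/eqP: M0; apply/matrixP => i j; rewrite mxE.
by have /= /negbFE/eqP := H (i, j).
Qed.

Lemma outer0 (x : 'M[F]_(k,1)) (y : 'M[F]_(1,l)) : x *m y = 0 -> x = 0 \/ y = 0.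
Proof.
move=> E; have [->|x0] := eqVneq x 0; first by left.
have [->|y0] := eqVneq y 0; first by right.
have [i [i' xi]] := nz_entry x0; have [j' [j yj]] := nz_entry y0.
move: xi yj; rewrite (ord1 i') (ord1 j') => xi yj.
have := congr1 (fun M : 'M[F]_(k,l) => M i j) E; rewrite /= outerE mxE => /eqP.
by rewrite mulf_eq0 (negbTE xi) (negbTE yj).
Qed.

Lemma outer_wd (g : 'M[F]_(k,1) -> 'M[F]_(m,1)) (hr : 'M[F]_(1,l) -> 'M[F]_(1,n)) :
  (forall c x, g (c *: x) = c *: g x) -> (forall c y, hr (c *: y) = c *: hr y) ->
  forall x y x' y', x *m y = x' *m y' -> g x *m hr y = g x' *m hr y'.
Proof.
move=> hg hh.
have g0 : g 0 = 0 by have := hg 0 0; rewrite !scale0r.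
have h0 : hr 0 = 0 by have := hh 0 0; rewrite !scale0r.
have zc x y : x *m y = 0 -> g x *m hr y = 0.
  by case/outer0 => ->; rewrite ?g0 ?h0 ?mul0mx ?mulmx0.
move=> x y x' y' E.
have [Z|NZ] := eqVneq (x *m y) 0.
  by rewrite (zc _ _ Z) (zc x' y') // -E.
have [i [j]] := nz_entry NZ; rewrite outerE mulf_eq0 negb_or => /andP [xi yj].
have Eij i0 j0 : x' i0 0 * y' 0 j0 = x i0 0 * y 0 j0.
  by have := congr1 (fun M : 'M[F]_(k,l) => M i0 j0) E; rewrite /= !outerE.
have y'j : y' 0 j != 0.
  by apply: contraNneq (mulf_neq0 xi yj) => z; rewrite -Eij z mulr0.
pose c := y 0 j / y' 0 j.
have Ex : x' = c *: x.
  apply/matrixP => i0 j0; rewrite (ord1 j0) mxE.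
  apply: (mulIf y'j); rewrite Eij /c; field; exact: y'j.
have Ey : y = c *: y'.
  apply/matrixP => i0 j0; rewrite (ord1 i0) mxE.
  apply: (mulfI xi); have := Eij i j0; rewrite Ex mxE => <-.
  by rewrite mulrCA mulrA.
by rewrite Ex hg -scalemxAl scalemxAr -hh -Ey.
Qed.

End Outer.

Section Psi.
Variables (F : fieldType).

Definition P1 a b (M : 'M[F]_(a,b)) := exists (x : 'M[F]_(a,1)) (y : 'M[F]_(1,b)), M = x *m y.

Lemma dcmp_ex a b : exists d : 'M[F]_(a,b) -> 'M[F]_(a,1) * 'M[F]_(1,b),
  forall M, P1 M -> M = (d M).1 *m (d M).2.
Proof.
have : forall M : 'M[F]_(a,b), exists xy : 'M[F]_(a,1) * 'M[F]_(1,b), P1 M -> M = xy.1 *m xy.2.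
  move=> M; case: (pselect (P1 M)) => [[x [y E]]|nP]; first by exists (x, y).
  by exists (0, 0).
by case/choice => d Hd; exists d.
Qed.

Definition Psi k l m n (d : 'M[F]_(k,l) -> 'M[F]_(k,1) * 'M[F]_(1,l))
  (g : 'M[F]_(k,1) -> 'M[F]_(m,1)) (hr : 'M[F]_(1,l) -> 'M[F]_(1,n))
  (bet : 'M[F]_(k,l) -> 'M[F]_(m,n)) (A : 'M[F]_(k,l)) : 'M[F]_(m,n) :=
  if pselect (P1 A) then g (d A).1 *m hr (d A).2 else bet A.

Lemma Psi_P1 k l m n d g hr bet :
  (forall M, P1 M -> M = (d M).1 *m (d M).2) ->
  (forall c x, g (c *: x) = c *: g x) -> (forall c y, hr (c *: y) = c *: hr y) ->
  forall x y, @Psi k l m n d g hr bet (x *m y) = g x *m hr y.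
Proof.
move=> Hd hg hh x y; rewrite /Psi; case: pselect => [P|nP]; last first.
  by case: nP; exists x, y.
by apply: outer_wd => //; rewrite -Hd.
Qed.

Lemma Psi_Q k l m n d g hr bet A : ~ P1 A -> @Psi k l m n d g hr bet A = bet A.
Proof. by rewrite /Psi; case: pselect. Qed.

Lemma PsiK k l m n d g hr bet d' g' hr' bet' :
  (forall M, P1 M -> M = (d M).1 *m (d M).2) ->
  (forall M, P1 M -> M = (d' M).1 *m (d' M).2) ->
  (forall c x, g (c *: x) = c *: g x) -> (forall c y, hr (c *: y) = c *: hr y) ->
  (forall c x, g' (c *: x) = c *: g' x) -> (forall c y, hr' (c *: y) = c *: hr' y) ->
  (forall x, g' (g x) = x) -> (forall y, hr' (hr y) = y) ->
  (forall A, ~ P1 A -> ~ P1 (bet A)) -> (forall A, ~ P1 A -> bet' (bet A) = A) ->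
  forall A, @Psi m n k l d' g' hr' bet' (@Psi k l m n d g hr bet A) = A.
Proof.
move=> Hd Hd' hg hh hg' hh' gK hK bQ bK A.
case: (pselect (P1 A)) => [[x [y ->]]|nP].
  by rewrite !Psi_P1 // gK hK.
by rewrite Psi_Q // Psi_Q ?bK //; apply: bQ.
Qed.

End Psi.

Lemma injS_trans T U W (A : T -> Prop) (B : U -> Prop) (C : W -> Prop) :
  injS A B -> injS B C -> injS A C.
Proof.
move=> [f [fAB fi]] [g [gBC gi]]; exists (g \o f); split.
  by move=> x Ax; apply/gBC/fAB.
by move=> x y Ax Ay /= /gi E; apply: fi => //; apply: E; apply: fAB.
Qed.

Section Inj.
Variables (F : fieldType) (HF : infinite_field F).

Lemma nat_inj : exists u : nat -> F, injective u.
Proof.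
have : forall s : seq F, exists x, x \notin s := HF.
case/choice => nw Hnw.
pose S := fix S n := if n is n.+1 then nw (S n) :: S n else [::].
have mem m n : (m < n)%N -> nw (S m) \in S n.
  elim: n => // n IH; rewrite ltnS leq_eqVlt => /orP [/eqP ->|/IH H] /=.
    by rewrite in_cons eqxx.
  by rewrite in_cons H orbT.
exists (fun n => nw (S n)) => p q E.
case: (ltngtP p q) => // H.
  by have := mem _ _ H; rewrite E (negbTE (Hnw _)).
by have := mem _ _ H; rewrite -E (negbTE (Hnw _)).
Qed.

Lemma pi_inj : exists pi : F * F -> F, injective pi.
Proof. by have [u ui] := nat_inj; exact: (hessen ui). Qed.

Lemma enc_ex a b : exists e : 'M[F]_(a,b) -> F, injective e.
Proof.
have [pi pii] := pi_inj.
pose encs (s : seq F) := foldr (fun x acc => pi (x, acc)) 0 s.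
have encs_inj s s' : size s = size s' -> encs s = encs s' -> s = s'.
  elim: s s' => [|x s IH] [|x' s'] //= [/IH Hs] /pii [-> /Hs ->] //.
pose e (M : 'M[F]_(a,b)) := encs [seq M ij.1 ij.2 | ij <- enum {: 'I_a * 'I_b}].
exists e => M M' /encs_inj; rewrite !size_map => /(_ erefl) /eq_in_map E.
apply/matrixP => i j; exact: (E (i, j) (mem_enum _ _)).
Qed.

Lemma N_F a b : injS (@Nset F a b) (fun _ : F => True).
Proof. have [e ei] := enc_ex a b; exists e; split => // x y _ _; exact: ei. Qed.

Lemma Q_F a b : injS (fun M : 'M[F]_(a,b) => ~ P1 M) (fun _ : F => True).
Proof. have [e ei] := enc_ex a b; exists e; split => // x y _ _; exact: ei. Qed.

Lemma F_N a b (p0 p1 : 'I_a * 'I_b) : p0 != p1 -> injS (fun _ : F => True) (@Nset F a b).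
Proof.
move=> np.
have f01 : (p0.1 == p1.1) && (p0.2 == p1.2) = false.
  by rewrite -xpair_eqE -!surjective_pairing (negbTE np).
have f10 : (p1.1 == p0.1) && (p1.2 == p0.2) = false.
  by rewrite -xpair_eqE -!surjective_pairing eq_sym (negbTE np).
pose v (t : F) : 'M[F]_(a,b) := delta_mx p0.1 p0.2 + t *: delta_mx p1.1 p1.2.
have v0 t : v t p0.1 p0.2 = 1.
  by rewrite !mxE !eqxx /= f01 mulr0 addr0.
have v1 t : v t p1.1 p1.2 = t.
  by rewrite !mxE !eqxx /= f10 mulr1 add0r.
have vnz t : v t != 0 by apply/eqP => /(congr1 (fun M : 'M[F]_(a,b) => M p0.1 p0.2)); rewrite v0 mxE => /eqP; rewrite oner_eq0.
exists (fun t => nrm (v t)); split; first by move=> t _; exact: nrmN.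
move=> t s _ _ E.
have Kt := nrmK (v t); have Ks := nrmK (v s).
rewrite E in Kt.
have Ht := congr1 (fun M : 'M[F]_(a,b) => M p0.1 p0.2) Kt.
have Hs := congr1 (fun M : 'M[F]_(a,b) => M p0.1 p0.2) Ks.
move: Ht Hs; rewrite /= !v0 => Ht Hs. rewrite [X in X = _]mxE in Ht. rewrite [X in X = _]mxE in Hs.
have Nz : nrm (v s) p0.1 p0.2 != 0 by apply: contra_eq_neq Hs => ->; rewrite mulr0 eq_sym oner_eq0.
have El : lead (v t) = lead (v s) by apply: (mulIf Nz); rewrite Ht Hs.
have Evv : v t = v s by rewrite -[LHS]Kt -[RHS]Ks El.
have := congr1 (fun M : 'M[F]_(a,b) => M p1.1 p1.2) Evv; rewrite /= !v1; exact.
Qed.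

Lemma F_Q a b : (1 < a)%N -> (1 < b)%N ->
  injS (fun _ : F => True) (fun M : 'M[F]_(a,b) => ~ P1 M).
Proof.
move=> ha hb.
pose i0 : 'I_a := Ordinal (ltnW ha); pose i1 : 'I_a := Ordinal ha.
pose j0 : 'I_b := Ordinal (ltnW hb); pose j1 : 'I_b := Ordinal hb.
have ni : (i0 == i1) = false by [].
have nj : (j0 == j1) = false by [].
pose M (t : F) : 'M[F]_(a,b) := delta_mx i0 j0 + delta_mx i1 j1 + t *: delta_mx i0 j1.
have M00 t : M t i0 j0 = 1 by rewrite !mxE !eqxx ni nj /= mulr0 !addr0.
have M11 t : M t i1 j1 = 1 by rewrite !mxE !eqxx eq_sym ni eq_sym nj /= mulr0 add0r addr0.
have M10 t : M t i1 j0 = 0 by rewrite !mxE !eqxx eq_sym ni nj /= mulr0 !addr0.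
have M01 t : M t i0 j1 = t by rewrite !mxE !eqxx ni eq_sym nj /= mulr1 !add0r.
exists M; split.
  move=> t _ [x [y E]].
  have e00 := M00 t; have e11 := M11 t; have e10 := M10 t.
  rewrite E !outerE in e00 e11 e10.
  move/eqP: e10; rewrite mulf_eq0 => /orP [/eqP x1|/eqP y0].
    by move: e11; rewrite x1 mul0r => /eqP; rewrite eq_sym oner_eq0.
  by move: e00; rewrite y0 mulr0 => /eqP; rewrite eq_sym oner_eq0.
move=> t s _ _ E; by rewrite -(M01 t) -(M01 s) E.
Qed.

End Inj.

Section Iso.
Variables (F : fieldType) (HF : infinite_field F).

Lemma bijN a b a' b' (p0 p1 : 'I_a * 'I_b) (q0 q1 : 'I_a' * 'I_b') :
  p0 != p1 -> q0 != q1 -> bijS (@Nset F a b) (@Nset F a' b').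
Proof.
move=> np nq; apply: (CSB 0 0).
  exact: injS_trans (N_F HF a b) (F_N F nq).
exact: injS_trans (N_F HF a' b') (F_N F np).
Qed.

Lemma bijQ a b a' b' : (1 < a)%N -> (1 < b)%N -> (1 < a')%N -> (1 < b')%N ->
  bijS (fun M : 'M[F]_(a,b) => ~ P1 M) (fun M : 'M[F]_(a',b') => ~ P1 M).
Proof.
move=> ha hb ha' hb'; apply: (CSB 0 0).
  exact: injS_trans (Q_F HF a b) (F_Q F ha' hb').
exact: injS_trans (Q_F HF a' b') (F_Q F ha hb).
Qed.

Theorem T_iso k l m n : (1 < k)%N -> (1 < l)%N -> (1 < m)%N -> (1 < n)%N ->
  exists (th : 'M[F]_(k,1) * 'M[F]_(1,l) * 'M[F]_(k,l) -> 'M[F]_(m,1) * 'M[F]_(1,n) * 'M[F]_(m,n))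
         (th' : 'M[F]_(m,1) * 'M[F]_(1,n) * 'M[F]_(m,n) -> 'M[F]_(k,1) * 'M[F]_(1,l) * 'M[F]_(k,l)),
    [/\ cancel th th', cancel th' th & forall t1 t2, th (tmul t1 t2) = tmul (th t1) (th t2)].
Proof.
move=> hk hl hm hn.
have [gam [gam' [gN gN' gK gK']]] : bijS (@Nset F k 1) (@Nset F m 1).
  apply: (@bijN _ _ _ _ (Ordinal (ltnW hk), ord0) (Ordinal hk, ord0)
                        (Ordinal (ltnW hm), ord0) (Ordinal hm, ord0)) => //.
have [del [del' [dN dN' dK dK']]] : bijS (@Nset F 1 l) (@Nset F 1 n).
  apply: (@bijN _ _ _ _ (ord0, Ordinal (ltnW hl)) (ord0, Ordinal hl)
                        (ord0, Ordinal (ltnW hn)) (ord0, Ordinal hn)) => //.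
have [bet [bet' [bQ bQ' bK bK']]] := bijQ hk hl hm hn.
have [d Hd] := dcmp_ex F k l.
have [d' Hd'] := dcmp_ex F m n.
pose g := hom gam; pose g' := hom gam'; pose hr := hom del; pose hr' := hom del'.
have gZ : forall c x, g (c *: x) = c *: g x by move=> c x; exact: homZ.
have gZ' : forall c x, g' (c *: x) = c *: g' x by move=> c x; exact: homZ.
have hZ : forall c x, hr (c *: x) = c *: hr x by move=> c x; exact: homZ.
have hZ' : forall c x, hr' (c *: x) = c *: hr' x by move=> c x; exact: homZ.
have gKK : cancel g g' by move=> x; apply: homK.
have gKK' : cancel g' g by move=> x; apply: homK.
have hKK : cancel hr hr' by move=> x; apply: homK.
have hKK' : cancel hr' hr by move=> x; apply: homK.
pose Ps := Psi d g hr bet; pose Ps' := Psi d' g' hr' bet'.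
exists (fun t => (g t.1.1, hr t.1.2, Ps t.2)), (fun t => (g' t.1.1, hr' t.1.2, Ps' t.2)).
split.
- move=> [[x y] A] /=; rewrite gKK hKK /Ps /Ps' PsiK //.
- move=> [[x y] A] /=; rewrite gKK' hKK' /Ps /Ps' PsiK //.
- move=> [[x1 y1] A1] [[x2 y2] A2]; rewrite /tmul /= /Ps Psi_P1 //.
  by rewrite /g /hr !hom0.
Qed.

End Iso.

End CARDm.
Import CARDm.

Theorem proposition15 (F : fieldType) (HF : infinite_field F) (k l m n : nat)
  (hk : (1 < k)%N) (hl : (1 < l)%N) (hm : (1 < m)%N) (hn : (1 < n)%N)
  (V : seq 'M[F]_(k + l + 1)) (W : seq 'M[F]_(m + n + 1)) :
  is_flag V -> flag_signature V = [:: k; 1; l]%N ->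
  is_flag W -> flag_signature W = [:: m; 1; n]%N ->
  semigroup_iso (phi V) (phi W).
Proof.
move=> fV sV fW sW.
have [V0 [V1 [V2 [V3 [B1 [B3 [e [-> uP h0 h3 /andP [/eqmxP E1 /eqmxP E2]]]]]]]]] := flag_basis fV sV.
have [W0 [W1 [W2 [W3 [C1 [C3 [e' [-> uQ g0 g3 /andP [/eqmxP D1 /eqmxP D2]]]]]]]]] := flag_basis fW sW.
have phV := phi_dec uP h0 h3 E1 E2.
have phW := phi_dec uQ g0 g3 D1 D2.
set PV := col_mx (col_mx B1 B3) e in uP phV *.
set PW := col_mx (col_mx C1 C3) e' in uQ phW *.
have [th [th' [thK th'K thM]]] := T_iso HF hk hl hm hn.
have : forall a, exists t, phi [:: V0; V1; V2; V3] a -> a = dec PV t.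
  move=> a; case: (pselect (phi [:: V0; V1; V2; V3] a)) => [/phV [t Ht]|nP].
    by exists t.
  by exists (0%R, 0%R, 0%R).
case/choice => tV HtV.
have tVdec t : tV (dec PV t) = t.
  apply: (dec_inj uP); rewrite -HtV //; apply/phV; by exists t.
exists (fun a => dec PW (th (tV a))); split.
- by move=> a _; apply/phW; eexists.
- move=> a b Sa Sb /(dec_inj uQ) /(can_inj thK) E.
  by rewrite (HtV a Sa) (HtV b Sb) E.
- move=> c /phW [t' ->]; exists (dec PV (th' t')); first by apply/phV; eexists.
  by rewrite tVdec th'K.
- move=> a b Sa Sb; rewrite (HtV a Sa) (HtV b Sb) dec_mul // !tVdec thM.
  by rewrite dec_mul.
Qed.
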